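(* Let $c\in\mathbb{R}$, $g\in\mathbb{R}^d$, let $\mathbf{H}\in\mathbb{R}^{d\times d}$ be symmetric, let $w^t\in\mathbb{R}^d$, and define $$q(w)=c+\langle g,w-w^t\rangle+\tfrac12\langle\mathbf{H}(w-w^t),w-w^t\rangle .$$ Assume $q$ has at least one root and let $w_q^*$ be a root of $q$ of least Euclidean norm, i.e. $w_q^*\in\arg\min\{\|w\|^2: q(w)=0\}$. Define the Newton–Raphson iterates $w^0=w^t$ and $$w^{i+1}=w^i-\frac{q(w^i)}{\|\nabla q(w^i)\|^2}\nabla q(w^i),\qquad i\ge0,$$ assuming $\nabla q(w^i)\neq0$ for all $i$. If $g\in\operatorname{Range}(\mathbf{H})$ and $w^0\in\operatorname{Range}(\mathbf{H})$, then $w^i\in\operatorname{Range}(\mathbf{H})$ and $\nabla q(w^i)\in\operatorname{Range}(\mathbf{H})$ for all $i$, and $w_q^*\in\operatorname{Range}(\mathbf{H})$.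
   Context: In the paper $c=f_i(w^t)$, $g=\nabla f_i(w^t)$, $\mathbf{H}=\nabla^2 f_i(w^t)$ for a twice differentiable loss $f_i$; the statement holds for arbitrary such data. *)

(* Defs.v *)
From HB Require Import structures.
From mathcomp Require Import all_boot all_order all_algebra.
From mathcomp Require Import reals.
Set Implicit Arguments. Unset Strict Implicit. Unset Printing Implicit Defensive.
Import Order.TTheory GRing.Theory Num.Theory.
Local Open Scope ring_scope.

Definition dotv (R : realType) (d : nat) (u v : 'cV[R]_d) : R :=
  \sum_(i < d) u i 0 * v i 0.

Definition sqnorm (R : realType) (d : nat) (u : 'cV[R]_d) : R := dotv u u.

Definition in_range (R : realType) (d : nat) (H : 'M[R]_d) (v : 'cV[R]_d) : Prop :=
  exists x : 'cV[R]_d, v = H *m x.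

Definition qfun (R : realType) (d : nat) (c : R) (g : 'cV[R]_d) (H : 'M[R]_d)
  (wt w : 'cV[R]_d) : R :=
  c + dotv g (w - wt) + 2^-1 * dotv (H *m (w - wt)) (w - wt).

(* Gradient of q for symmetric H: grad q(w) = g + H (w - wt). *)
Definition gradq (R : realType) (d : nat) (g : 'cV[R]_d) (H : 'M[R]_d)
  (wt w : 'cV[R]_d) : 'cV[R]_d :=
  g + H *m (w - wt).

Fixpoint nr_iter (R : realType) (d : nat) (c : R) (g : 'cV[R]_d) (H : 'M[R]_d)
  (wt : 'cV[R]_d) (i : nat) : 'cV[R]_d :=
  match i with
  | 0 => wt
  | i'.+1 =>
      let w := nr_iter c g H wt i' in
      w - (qfun c g H wt w / sqnorm (gradq g H wt w)) *: gradq g H wt w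
  end.

(* Main.v *)
Require Import Defs.
From HB Require Import structures.
From mathcomp Require Import all_boot all_order all_algebra.
From mathcomp Require Import reals.
Import Order.TTheory GRing.Theory Num.Theory.
Local Open Scope ring_scope.

Lemma decomp (R : realType) d (H : 'M[R]_d) (w : 'cV[R]_d) : H^T = H ->
  exists u n : 'cV[R]_d, w = H *m u + n /\ H *m n = 0.
Proof.
move=> tH.
have cap0 : (H :&: kermx H)%MS = 0.
  set C := (H :&: kermx H)%MS.
  have /submxP[X eX] : (C <= H)%MS := capmxSl _ _.
  have /sub_kermxP CH : (C <= kermx H)%MS := capmxSr _ _.
  have CC : C *m C^T = 0.
    by rewrite [X in _ *m X^T]eX trmx_mul tH mulmxA CH mul0mx.
  apply/matrixP => i j; rewrite mxE.
  have := congr1 (fun M : 'M_d => M i i) CC; rewrite !mxE => h.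
  have P : forall k, true -> 0 <= C i k * C^T k i.
    by move=> k _; rewrite mxE -expr2 sqr_ge0.
  move: (@psumr_eq0P _ _ _ _ P h j isT); rewrite mxE => /eqP; rewrite mulf_eq0 orbb => /eqP.
  done.
have full : row_full (H + kermx H)%MS.
  apply/eqP; have := mxrank_sum_cap H (kermx H).
  rewrite cap0 mxrank0 addn0 mxrank_ker => ->.
  by rewrite subnKC // rank_leq_row.
have /sub_addsmxP[[a b] /= e] := submx_full w^T full.
exists a^T, (b *m kermx H)^T; split.
  by rewrite -[w]trmxK e linearD /= trmx_mul tH.
have /sub_kermxP K : (b *m kermx H <= kermx H)%MS := submxMl _ _.
by rewrite -[H in H *m _]tH -trmx_mul K trmx0.
Qed.

Section Dot.
Variables (R : realType) (d : nat).
Implicit Types u v w : 'cV[R]_d.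

Lemma dotvDl u v w : dotv (u + v) w = dotv u w + dotv v w.
Proof. by rewrite /dotv -big_split; apply: eq_bigr => i _; rewrite !mxE mulrDl. Qed.
Lemma dotvDr u v w : dotv w (u + v) = dotv w u + dotv w v.
Proof. by rewrite /dotv -big_split; apply: eq_bigr => i _; rewrite !mxE mulrDr. Qed.
Lemma dotvC u v : dotv u v = dotv v u.
Proof. by apply: eq_bigr => i _; rewrite mulrC. Qed.
Lemma dotvE u v : dotv u v = (u^T *m v) 0 0.
Proof. by rewrite mxE; apply: eq_bigr => i _; rewrite mxE. Qed.
Lemma dotv0r u : dotv u 0 = 0.
Proof. by rewrite /dotv big1 // => i _; rewrite mxE mulr0. Qed.
Lemma dotv0l u : dotv 0 u = 0.
Proof. by rewrite /dotv big1 // => i _; rewrite mxE mul0r. Qed.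
Lemma dotvM (H : 'M[R]_d) u v : H^T = H -> dotv u (H *m v) = dotv (H *m u) v.
Proof. by move=> tH; rewrite !dotvE trmx_mul tH mulmxA. Qed.
Lemma sqnorm_ge0 u : 0 <= sqnorm u.
Proof. by apply: sumr_ge0 => i _; rewrite -expr2 sqr_ge0. Qed.
Lemma sqnorm_eq0 u : sqnorm u = 0 -> u = 0.
Proof.
move=> h; apply/matrixP => i j; rewrite (ord1 j) mxE.
have P : forall k : 'I_d, true -> 0 <= u k 0 * u k 0 by move=> k _; rewrite -expr2 sqr_ge0.
by move: (@psumr_eq0P _ _ _ _ P h i isT) => /eqP; rewrite mulf_eq0 orbb => /eqP.
Qed.
End Dot.

Lemma in_rangeD (R : realType) d (H : 'M[R]_d) u v :
  in_range H u -> in_range H v -> in_range H (u + v).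
Proof. by move=> [x ->] [y ->]; exists (x + y); rewrite mulmxDr. Qed.
Lemma in_rangeN (R : realType) d (H : 'M[R]_d) u :
  in_range H u -> in_range H (- u).
Proof. by move=> [x ->]; exists (- x); rewrite mulmxN. Qed.
Lemma in_rangeZ (R : realType) d (H : 'M[R]_d) a u :
  in_range H u -> in_range H (a *: u).
Proof. by move=> [x ->]; exists (a *: x); rewrite scalemxAr. Qed.

Theorem lemma6 (R : realType) (d : nat) (c : R) (g : 'cV[R]_d) (H : 'M[R]_d)
  (wt wq : 'cV[R]_d) :
  H^T = H ->
  qfun c g H wt wq = 0 ->
  (forall w : 'cV[R]_d, qfun c g H wt w = 0 -> sqnorm wq <= sqnorm w) ->
  (forall i : nat, gradq g H wt (nr_iter c g H wt i) != 0) ->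
  in_range H g ->
  in_range H wt ->
  (forall i : nat, in_range H (nr_iter c g H wt i) /\
                   in_range H (gradq g H wt (nr_iter c g H wt i))) /\
  in_range H wq.
Proof.
move=> tH q0 qmin _ rg rwt.
have rgrad : forall w, in_range H (gradq g H wt w).
  by move=> w; apply: in_rangeD => //; exists (w - wt).
split.
  move=> i; split; last exact: rgrad.
  elim: i => [|i IH] //=.
  by apply: in_rangeD => //; apply: in_rangeN; apply: in_rangeZ.
have [u [n [e Hn]]] := @decomp R d H wq tH.
set p := H *m u.
have gn : dotv g n = 0 by case: rg => y ->; rewrite dotvC dotvM // Hn dotv0l.
have pn : dotv p n = 0 by rewrite /p dotvC dotvM // Hn dotv0l.
have wtn : dotv wt n = 0 by case: rwt => y ->; rewrite dotvC dotvM // Hn dotv0l.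
have qp : qfun c g H wt p = 0.
  rewrite -q0 /qfun e.
  have -> : p + n - wt = (p - wt) + n by rewrite addrAC.
  rewrite mulmxDr Hn addr0 !dotvDr gn addr0.
  rewrite [dotv (H *m _) n]dotvC dotvM // Hn dotv0l addr0 //.
have := qmin _ qp.
have -> : sqnorm wq = sqnorm p + sqnorm n.
  rewrite /sqnorm e !dotvDl !dotvDr pn [dotv n p]dotvC pn addr0 add0r //.
rewrite gerDl => hn.
have n0 : n = 0.
  by apply: sqnorm_eq0; apply/eqP; rewrite eq_le hn sqnorm_ge0.
by exists u; rewrite e n0 addr0.
Qed.
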